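(* In the security-third model, for any attacker $m$, destination $d$, and AS $s$: if $s$ uses (in the stable routing state during $m$'s attack) a route to $d$ that avoids $m$ when the set of secure ASes is $S$, then $s$ uses a route to $d$ that avoids $m$ for every set of secure ASes $T\supset S$.
   Context: An AS graph is an undirected graph $G=(V,E)$ of ASes; each edge is labeled customer–provider or peer–peer. Routing is to a destination $d$; $d$ announces ''$d$'' to its neighbors; each other AS selects at most one route to $d$ among those announced by neighbors and announces it (prepended with itself) per the export policy: a route whose next hop is a customer is announced to all neighbors, otherwise only to customers. Route type is given by the relation of the next hop; length is the number of hops in the announced path. Insecure ASes rank routes by (LP) customer over peer over provider, then (SP) shorter over longer, then (TB) a fixed deterministic AS-specific tie-break. For a set of secure ASes, a route is secure iff all ASes on it are secure; in the security-third model each secure AS applies (SecP): prefer secure over insecure routes, between SP and TB. The attack: attacker $m\ne d$ (not a neighbor of $d$) announces the bogus path ''$m,d$'' via insecure BGP to all its neighbors; routes containing $m$ are insecure. A stable routing state is one in which no AS re-running its selection changes its route. *)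

(* Defs.v *)
From mathcomp Require Import all_boot.
Set Implicit Arguments. Unset Strict Implicit. Unset Printing Implicit Defensive.

Section BGP.
Variable V : finType.
(* AS graph: [cp u v] means "u is a customer of v" (v is a provider of u);
   [pp u v] means "u and v are peers". *)
Variables (cp pp : rel V).
(* AS-specific deterministic tie-break: AS x prefers next hop y over z
   iff tb x y < tb x z (assumed injective in x's argument, i.e. a strict
   total order on next hops). *)
Variable tb : V -> V -> nat.
Variables (d m : V).

Definition wf_graph : Prop :=
  [/\ forall u, ~~ cp u u && ~~ pp u u,
      forall u v, pp u v = pp v u,
      forall u v, ~~ (cp u v && cp v u) &
      forall u v, ~~ ((cp u v || cp v u) && pp u v)].

Definition adj (u v : V) : bool := [|| cp u v, cp v u | pp u v].

(* a route held by AS x is a path [:: x, next hop, ..., d] *)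
Definition nexthop (x : V) (r : seq V) : V := nth x r 1.

(* local preference of x for a route through neighbour y:
   customer (0) over peer (1) over provider (2) *)
Definition lp (x y : V) : nat := if cp y x then 0 else if pp x y then 1 else 2.

Definition rlen (r : seq V) : nat := (size r).-1.

Definition secure (S : {set V}) (r : seq V) : bool :=
  all (fun v => v \in S) r && (m \notin r).

(* SecP only applies at secure ASes *)
Definition secbit (S : {set V}) (x : V) (r : seq V) : nat :=
  if (x \in S) && secure S r then 0 else 1.

(* [better S x r1 r2] : AS x strictly prefers r1 over r2
   (LP, then SP, then SecP (secure ASes only), then TB) *)
Definition better (S : {set V}) (x : V) (r1 r2 : seq V) : bool :=
  let l1 := lp x (nexthop x r1) in let l2 := lp x (nexthop x r2) in
  let n1 := rlen r1 in let n2 := rlen r2 in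
  let s1 := secbit S x r1 in let s2 := secbit S x r2 in
  let t1 := tb x (nexthop x r1) in let t2 := tb x (nexthop x r2) in
  (l1 < l2) || ((l1 == l2) && ((n1 < n2) || ((n1 == n2) &&
    ((s1 < s2) || ((s1 == s2) && (t1 < t2)))))).

(* export policy: d announces "d" to all neighbours, m announces "m,d" to
   all neighbours; any other AS y announces its route p to x iff the next
   hop of p is a customer of y, or x is a customer of y *)
Definition exports (y : V) (p : seq V) (x : V) : bool :=
  [|| y == d, y == m,
      (if p is _ :: z :: _ then cp z y else false) | cp x y].

Definition state := V -> option (seq V).

Definition avail (R : state) (x : V) (r : seq V) : Prop :=
  exists y p, [/\ adj x y, R y = Some p, exports y p x, x \notin p & r = x :: p].

Definition stable (S : {set V}) (R : state) : Prop :=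
  [/\ R d = Some [:: d],
      R m = Some [:: m; d] &
      forall x, x != d -> x != m ->
        match R x with
        | None => forall r, ~ avail R x r
        | Some r => avail R x r /\ forall r', avail R x r' -> ~~ better S x r' r
        end].

End BGP.

Definition avoids (V : eqType) (m : V) (o : option (seq V)) : bool :=
  if o is Some p then m \notin p else false.

(* Main.v *)
Require Import Defs.
From mathcomp Require Import all_boot.
From mathcomp Require Import zify.
Set Implicit Arguments. Unset Strict Implicit. Unset Printing Implicit Defensive.

Section Proof.
Variable V : finType.
Variables (cp pp : rel V) (tb : V -> V -> nat) (d m : V).
Hypothesis wf : wf_graph cp pp.

Local Notation lp := (lp cp pp).
Local Notation exports := (exports cp d m).
Local Notation stable := (stable cp pp tb d m).

Definition nodm x := (x != d) && (x != m).

Lemma cp_irr u : cp u u = false.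
Proof. by case: wf => H _ _ _; case/andP: (H u) => /negbTE. Qed.
Lemma pp_irr u : pp u u = false.
Proof. by case: wf => H _ _ _; case/andP: (H u) => _ /negbTE. Qed.

Lemma lp_le2 x y : lp x y <= 2.
Proof. by rewrite /Defs.lp; case: (cp y x) => //; case: (pp x y). Qed.

Lemma exportsE y p x :
  exports y p x = [|| y == d, y == m, lp y (nexthop y p) == 0 | cp x y].
Proof.
rewrite /Defs.exports /Defs.lp /nexthop.
case: p => [|a [|z q]] /=; rewrite ?cp_irr ?pp_irr //.
by case: (cp z y) => //; case: (pp y z).
Qed.

Lemma stepR X R x r : stable X R -> x != d -> x != m -> R x = Some r ->
  exists y p, [/\ adj cp pp x y, R y = Some p, exports y p x, x \notin p & r = x :: p].
Proof.
case=> _ _ H xd xm Rx; have := H x xd xm; rewrite Rx; case=> [[y [p]]] H1 _.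
by exists y, p.
Qed.

Lemma headR X R z p : stable X R -> R z = Some p -> exists p', p = z :: p'.
Proof.
move=> st Rz; case: (eqVneq z d) => [zd|zd].
  by subst z; case: st => Rd _ _; move: Rz; rewrite Rd => -[<-]; exists [::].
case: (eqVneq z m) => [zm|zm].
  by subst z; case: st => _ Rm _; move: Rz; rewrite Rm => -[<-]; exists [:: d].
by have [y [q [_ _ _ _ ->]]] := stepR st zd zm Rz; exists q.
Qed.

Lemma rank w z p : adj cp pp w z -> exports z p w -> z != d -> z != m ->
  lp z (nexthop z p) <= lp w z.
Proof.
move=> _ ex zd zm; move: ex; rewrite exportsE (negbTE zd) (negbTE zm) /=.
case/orP=> [/eqP -> //|cwz].
case: wf => _ _ Hanti Hpp.
rewrite /Defs.lp.
have -> : cp z w = false.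
  by apply/negP=> czw; move: (Hanti w z); rewrite cwz czw.
have -> : pp w z = false.
  by apply/negP=> pwz; move: (Hpp w z); rewrite cwz pwz.
by have := lp_le2 z (nexthop z p).
Qed.


Lemma Rd_eq X R : stable X R -> R d = Some [:: d].
Proof. by case. Qed.
Lemma Rm_eq X R : stable X R -> R m = Some [:: m; d].
Proof. by case. Qed.

Lemma chain X R x : stable X R -> x != d -> x != m -> forall q w,
  R w = Some q -> x \in q ->
  exists rx, [/\ R x = Some rx, lp x (nexthop x rx) <= lp w (nexthop w q)
              & rlen rx <= rlen q].
Proof.
move=> st xd xm; elim=> [|a p IH] w Rw xq; first by [].
case: (eqVneq w d) => [wd|wd].
  by subst w; move: Rw; rewrite (Rd_eq st) => -[ha hp]; subst a p; move: xq; rewrite inE (negbTE xd).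
case: (eqVneq w m) => [wm|wm].
  subst w; move: Rw; rewrite (Rm_eq st) => -[ha hp]; subst a p; move: xq.
  by rewrite !inE (negbTE xd) (negbTE xm).
have [z [p' [az Rz ex xnp]]] := stepR st wd wm Rw.
case=> aw pp'; subst a p'.
case: (eqVneq x w) => [xw|xw]; first by subst x; exists (w :: p); split.
have xp : x \in p by move: xq; rewrite inE (negbTE xw).
have [rx [Rx H1 H2]] := IH z Rz xp.
have [p'' ep] := headR st Rz.
case: (eqVneq z d) => [zd|zd].
  by subst z; move: Rz; rewrite (Rd_eq st) => -[ep']; move: xp; rewrite -ep' inE (negbTE xd).
case: (eqVneq z m) => [zm|zm].
  subst z; move: Rz; rewrite (Rm_eq st) => -[ep']; move: xp.
  by rewrite -ep' !inE (negbTE xd) (negbTE xm).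
exists rx; split => //.
  apply: (leq_trans H1); rewrite {2}/nexthop ep /=.
  by have := rank az ex zd zm; rewrite ep.
by apply: (leq_trans H2); rewrite /rlen ep /=.
Qed.


Definition cls x r := (lp x (nexthop x r), rlen r).
Definition C (R : state V) x := omap (cls x) (R x).
Definition lexle (a b : nat * nat) := (a.1 < b.1) || (a.1 == b.1) && (a.2 <= b.2).

Lemma lexle_of a b c e : a <= c -> b <= e -> lexle (a, b) (c, e).
Proof. rewrite /lexle /=; lia. Qed.

Lemma notbetter_lexle Y x r r2 : ~~ better cp pp tb m Y x r r2 -> lexle (cls x r2) (cls x r).
Proof. rewrite /better /lexle /cls /=; lia. Qed.


Lemma not_in_dm X R y p x : stable X R -> R y = Some p -> x \in p -> x != d -> x != m ->
  (y != d) && (y != m).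
Proof.
move=> st Ry xp xd xm; apply/andP; split; apply/eqP=> e; subst y.
  by move: Ry; rewrite (Rd_eq st) => -[ep]; move: xp; rewrite -ep inE (negbTE xd).
by move: Ry; rewrite (Rm_eq st) => -[ep]; move: xp; rewrite -ep !inE (negbTE xd) (negbTE xm).
Qed.

Lemma core X Y R1 R2 x y p : stable X R1 -> stable Y R2 -> x != d -> x != m ->
  R1 y = Some p -> adj cp pp x y -> exports y p x ->
  C R1 y = C R2 y -> exists r2, R2 x = Some r2 /\ lexle (cls x r2) (cls x (x :: p)).
Proof.
move=> st1 st2 xd xm R1y axy ex CE.
have [p1 ep] := headR st1 R1y.
move: CE; rewrite /C R1y; case R2y: (R2 y) => [p2|] //= [Hl Hn].
have [p2' ep2] := headR st2 R2y.
have clsE : cls x (x :: p) = (lp x y, size p) by rewrite /cls /nexthop ep.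
case: (boolP (x \in p2)) => xp2.
  have /andP [yd ym] := not_in_dm st2 R2y xp2 xd xm.
  have [rx [R2x H1 H2]] := chain st2 xd xm R2y xp2.
  exists rx; split => //; rewrite clsE /cls; apply: lexle_of.
    by apply: (leq_trans H1); rewrite -Hl; apply: rank.
  by apply: (leq_trans H2); rewrite -Hn /rlen ep /= leqnSn.
have av : avail cp pp d m R2 x (x :: p2).
  exists y, p2; split => //.
  by move: ex; rewrite !exportsE Hl.
case: st2 => _ _ H; move: (H x xd xm); case: (R2 x) => [r2|]; last by move=> /(_ _ av).
case=> _ /(_ _ av) nb; exists r2; split => //.
rewrite clsE; move: (notbetter_lexle nb).
suff -> : cls x (x :: p2) = (lp x y, size p) by [].
by rewrite /cls /nexthop ep2 /=; congr pair; move: Hn; rewrite /rlen ep ep2 /= => ->.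
Qed.


Lemma lexlt_cases l' n' l n : lexle (l', n') (l, n) -> (l', n') != (l, n) ->
  (l' < l) \/ (l' = l /\ n' < n).
Proof.
rewrite /lexle /= xpair_eqE => /orP [-> |/andP [/eqP -> H]]; first by left.
by rewrite eqxx /= => H'; right; split => //; rewrite ltn_neqAle H' H.
Qed.

Lemma half X Y R1 R2 x c : stable X R1 -> stable Y R2 ->
  (forall c' z, lexle c' c -> c' != c ->
     (C R1 z = Some c' \/ C R2 z = Some c') -> C R1 z = C R2 z) ->
  C R1 x = Some c -> C R1 x = C R2 x.
Proof.
move=> st1 st2 IH C1x.
case: (eqVneq x d) => [xd|xd].
  by subst x; rewrite /C (Rd_eq st1) (Rd_eq st2).
case: (eqVneq x m) => [xm|xm].
  by subst x; rewrite /C (Rm_eq st1) (Rm_eq st2).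
move: C1x; rewrite /C; case R1x: (R1 x) => [r1|] //= [cE].
have [y [p [axy R1y ex xnp er1]]] := stepR st1 xd xm R1x; subst r1.
have [p1 ep] := headR st1 R1y.
have CY : C R1 y = C R2 y.
  case: (eqVneq y d) => [yd|yd].
    by subst y; rewrite /C (Rd_eq st1) (Rd_eq st2).
  case: (eqVneq y m) => [ym|ym].
    by subst y; rewrite /C (Rm_eq st1) (Rm_eq st2).
  apply: (IH (cls y p)); last by left; rewrite /C R1y.
    rewrite -cE /cls; apply: lexle_of.
      have -> : nexthop x (x :: p) = y by rewrite /nexthop ep.
      exact: rank.
    by rewrite /rlen ep.
  rewrite -cE /cls xpair_eqE negb_and; apply/orP; right.
  rewrite /rlen ep /=; lia.
have [r2 [R2x le]] := core st1 st2 xd xm R1y axy ex CY.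
rewrite /C R2x /=.
case: (eqVneq (cls x r2) c) => [-> //|ne].
  by rewrite cE.
have := IH (cls x r2) x; rewrite -cE => /(_ le); rewrite cE => /(_ ne).
by rewrite /C R1x R2x /= cE => /(_ (or_intror erefl)).
Qed.


Lemma classeq X Y R1 R2 : stable X R1 -> stable Y R2 -> forall x, C R1 x = C R2 x.
Proof.
move=> st1 st2.
suff H : forall l n z, (C R1 z = Some (l, n) \/ C R2 z = Some (l, n)) ->
           C R1 z = C R2 z.
  move=> x; case E1: (C R1 x) => [[l n]|].
    by rewrite -E1; apply: (H l n); left.
  case E2: (C R2 x) => [[l n]|] //.
  by rewrite -E1 -E2; apply: (H l n); right.
elim/ltn_ind=> l IHl; elim/ltn_ind=> n IHn.
have IH : forall c' z, lexle c' (l, n) -> c' != (l, n) ->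
     (C R1 z = Some c' \/ C R2 z = Some c') -> C R1 z = C R2 z.
  move=> [l' n'] z le ne; case: (lexlt_cases le ne) => [lt|[-> lt]].
    exact: IHl.
  exact: IHn.
move=> z [H1|H2]; first exact: (half st1 st2 IH H1).
apply/esym; apply: (half st2 st1 _ H2) => c' z' le ne H.
by apply/esym; apply: IH le ne _; case: H; [right|left].
Qed.


Lemma secure_cons X x p : secure m X (x :: p) = [&& x \in X, x != m & secure m X p].
Proof.
rewrite /secure /= in_cons (eq_sym m x).
by case: (x \in X); case: (x == m); case: (all _ p); case: (m \in p).
Qed.

Lemma secure_mono (X Y : {set V}) r : X \subset Y -> secure m X r -> secure m Y r.
Proof.
move=> sub /andP [/allP H nm]; rewrite /secure nm andbT; apply/allP => v /H.
exact: (subsetP sub).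
Qed.

Lemma secure_nom X r : secure m X r -> m \notin r.
Proof. by case/andP. Qed.

Lemma cls_eqE x a b : cls x a = cls x b ->
  lp x (nexthop x a) = lp x (nexthop x b) /\ rlen a = rlen b.
Proof. by case. Qed.

Lemma better_eq Y x r1 r2 : lp x (nexthop x r1) = lp x (nexthop x r2) ->
  rlen r1 = rlen r2 ->
  better cp pp tb m Y x r1 r2 =
  (secbit m Y x r1 < secbit m Y x r2) ||
  (secbit m Y x r1 == secbit m Y x r2) && (tb x (nexthop x r1) < tb x (nexthop x r2)).
Proof. by move=> E1 E2; rewrite /better /= E1 E2 !ltnn !eqxx. Qed.

Lemma secbitE Y x r : secbit m Y x r = if (x \in Y) && secure m Y r then 0 else 1.
Proof. by []. Qed.

Lemma CSome R1 R2 x r : C R1 x = C R2 x -> R1 x = Some r ->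
  exists r2, R2 x = Some r2 /\ cls x r = cls x r2.
Proof. move=> H E; move: H; rewrite /C E; case: (R2 x) => [r2|] // H; exists r2; split => //; exact: Some_inj H. Qed.

Lemma notin_loop X R x y p b : stable X R -> x != d -> x != m ->
  R x = Some b -> R y = Some p -> rlen p < rlen b -> x \notin p.
Proof.
move=> st xd xm Rx Ry lt; apply/negP => xp.
have [rx [Rx' _ H2]] := chain st xd xm Ry xp.
by move: Rx'; rewrite Rx => -[eb]; subst rx; move: (leq_trans lt H2); rewrite ltnn.
Qed.

Lemma avail_of X R x y p q : stable X R -> adj cp pp x y -> R y = Some q ->
  exports y p x -> lp y (nexthop y p) = lp y (nexthop y q) -> x \notin q ->
  avail cp pp d m R x (x :: q).
Proof.
move=> st axy Ry ex E xq; exists y, q; split => //.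
by move: ex; rewrite !exportsE E.
Qed.

Lemma nb_of Y R x r : stable Y R -> x != d -> x != m -> R x = Some r ->
  forall r', avail cp pp d m R x r' -> ~~ better cp pp tb m Y x r' r.
Proof. by case=> _ _ H xd xm Rx; move: (H x xd xm); rewrite Rx => -[]. Qed.

Variables (S T : {set V}) (RS RT : state V).
Hypotheses (sST : S \subset T) (tbinj : forall x, injective (tb x))
  (stS : stable S RS) (stT : stable T RT).

Definition J x := match RS x, RT x with
  | Some a, Some b => (secure m S a -> secure m T b) /\ (m \notin a -> m \notin b)
  | _, _ => True end.

Lemma mainJ n : forall x a, RS x = Some a -> rlen a = n -> J x.
Proof.
elim/ltn_ind: n => n IH x a RSx ea.
have CE := classeq stS stT.
rewrite /J RSx.
case: (eqVneq x d) => [xd|xd].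
  subst x; move: RSx; rewrite (Rd_eq stS) (Rd_eq stT) => -[<-].
  by split => //; apply: secure_mono.
case: (eqVneq x m) => [xm|xm].
  subst x; move: RSx; rewrite (Rm_eq stS) (Rm_eq stT) => -[<-].
  by split => //; apply: secure_mono.
have [b [RTx cab]] := CSome (CE x) RSx; rewrite RTx.
have [y [pa [axy RSy exa xpa ea']]] := stepR stS xd xm RSx; subst a.
have [z [pb [axz RTz exb xpb eb']]] := stepR stT xd xm RTx; subst b.
have [lpE lenE] := cls_eqE cab.
have [qy [RTy cy]] := CSome (CE y) RSy.
have [pz [RSz cz]] := CSome (esym (CE z)) RTz.
have [lpy leny] := cls_eqE cy.
have [lpz lenz] := cls_eqE cz.
have [pa' epa] := headR stS RSy.
have [qy' eqy] := headR stT RTy.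
have [pb' epb] := headR stT RTz.
have [pz' epz] := headR stS RSz.
have Jy : J y.
  apply: (IH (rlen pa) _ y pa RSy erefl); rewrite -ea /rlen epa /=; lia.
have Jz : J z.
  apply: (IH (rlen pz) _ z pz RSz erefl); rewrite -ea lenE -lenz /rlen epb /=; lia.
move: Jy Jz; rewrite /J RSy RTy RSz RTz => -[Jy1 Jy2] [Jz1 Jz2].
have xqy : x \notin qy.
  by apply: (notin_loop stT xd xm RTx RTy); rewrite -leny -lenE /rlen epa.
have xpz : x \notin pz.
  by apply: (notin_loop stS xd xm RSx RSz); rewrite -lenz lenE /rlen epb.
have nbT := nb_of stT xd xm RTx (avail_of stT axy RTy exa lpy xqy).
have nbS := nb_of stS xd xm RSx (avail_of stS axz RSz exb lpz xpz).
have nhy : nexthop x (x :: qy) = y by rewrite /nexthop eqy.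
have nhz : nexthop x (x :: pz) = z by rewrite /nexthop epz.
have nha : nexthop x (x :: pa) = y by rewrite /nexthop epa.
have nhb : nexthop x (x :: pb) = z by rewrite /nexthop epb.
rewrite better_eq in nbT; first last.
- by move: leny lenE; rewrite /rlen epa eqy epb /= => -> ->.
- by rewrite -lpE nhy nha.
rewrite better_eq in nbS; first last.
- by move: lenz lenE; rewrite /rlen epz epa epb /= => -> ->.
- by rewrite lpE nhz nhb.
rewrite nhy nhb in nbT; rewrite nhz nha in nbS.
have I1 : secure m S (x :: pa) -> secure m T (x :: pb).
  rewrite secure_cons => /and3P [xS _ spa].
  have xT : x \in T by apply: (subsetP sST).
  move: nbT; rewrite !secbitE secure_cons xT xm (Jy1 spa) /=.
  by case: ifP.
split => // mpa.
case sb: (secure m T (x :: pb)); first exact: secure_nom sb.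
have xT' : (x \in T) && secure m T (x :: pb) = false by rewrite sb andbF.
move: nbT; rewrite !secbitE xT' /=.
case: ifP => [_ //|_] /= ntb.
have s1 : ((x \in S) && secure m S (x :: pz)) = false.
  apply/negP => /andP [xS]; rewrite secure_cons => /and3P [_ _ spz].
  by move: sb; rewrite secure_cons (subsetP sST _ xS) xm (Jz1 spz).
have s2 : ((x \in S) && secure m S (x :: pa)) = false.
  by apply/negP => /andP [_ /I1]; rewrite sb.
move: nbS; rewrite !secbitE s1 s2 /= => ntb'.
have eyz : y = z.
  by apply: (@tbinj x y z); apply/eqP; rewrite eqn_leq leqNgt ntb' leqNgt ntb.
move: RTz; rewrite -eyz RTy => -[eq]; subst qy.
rewrite in_cons negb_or eq_sym xm /=.
rewrite -eq; apply: Jy2; by move: mpa; rewrite in_cons negb_or => /andP [].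
Qed.

End Proof.

Theorem theorem4 (V : finType) (cp pp : rel V) (tb : V -> V -> nat)
    (d m s : V) (S T : {set V}) (RS RT : V -> option (seq V)) :
  wf_graph cp pp ->
  (forall x, injective (tb x)) ->
  m != d -> ~~ adj cp pp m d ->
  S \subset T ->
  (* RS is THE stable routing state during m's attack with secure set S *)
  stable cp pp tb d m S RS -> (forall R, stable cp pp tb d m S R -> R =1 RS) ->
  (* RT is THE stable routing state during m's attack with secure set T *)
  stable cp pp tb d m T RT -> (forall R, stable cp pp tb d m T R -> R =1 RT) ->
  avoids m (RS s) -> avoids m (RT s).
Proof.
move=> wf tbinj _ _ sST stS _ stT _.
rewrite /avoids; case RSs: (RS s) => [a|] // ma.
have CE := classeq wf stS stT s.
have [b [RTs _]] := CSome CE RSs.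
have := mainJ wf sST tbinj stS stT RSs erefl.
by rewrite /J RSs RTs => -[_ /(_ ma)].
Qed.
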